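(* Let $S$ be an instance of SCS-RC, let $T$ be the set computed by \textsf{MGREEDY-RC} on $S$, and let $\mathcal C$ be the cycle cover of $G_S$ produced by \textsf{MGREEDY-RC}. For each cycle $C\in\mathcal C$ let $x_C$ be a string satisfying properties (1)–(4) below, and let $A=\{x_C : C\in\mathcal C\}$. Then $\|T\| \le \|A\|$, where $\|T\|=\sum_{t\in T}|t|$ and $\|A\|=\sum_{C\in\mathcal C}|x_C|$.
   Context: Alphabet $\Sigma=\{\texttt a,\texttt t,\texttt g,\texttt c\}$ with complement $\bar{\texttt a}=\texttt t$, $\bar{\texttt t}=\texttt a$, $\bar{\texttt g}=\texttt c$, $\bar{\texttt c}=\texttt g$; the reverse complement of $s=b_1\cdots b_n$ is $\bar{s}^R=\bar{b_n}\cdots\bar{b_1}$, and $\bar S^R=\{\bar s^R: s\in S\}$. An instance of SCS-RC is a finite set $S=\{s_1,\dots,s_m\}$ of strings over $\Sigma$ such that no string of $S\cup\bar S^R$ is a substring of another. For strings $x,y$, $\mathrm{ov}(x,y)$ is the length of the longest $v$ with $x=uv$, $y=vw$ for nonempty $u,w$; $\mathrm{pref}(x,y)=u$; $\mathrm{dist}(x,y)=|x|-\mathrm{ov}(x,y)$; $\langle x_1,\dots,x_r\rangle=\mathrm{pref}(x_1,x_2)\cdots\mathrm{pref}(x_{r-1},x_r)\,x_r$. The distance graph $G_S$ is the complete directed graph (with loops) on $S\cup\bar S^R$ with edge weights $\mathrm{dist}$; a cycle $z_1,\dots,z_r,z_1$ (distinct vertices) has weight $w(C)=\sum_i\mathrm{dist}(z_i,z_{i+1})$,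 $z_{r+1}=z_1$; a cycle cover contains, as vertex-disjoint cycles, exactly one of $s_i,\bar{s_i}^R$ for each $i$. \textsf{MGREEDY-RC} on $S$: set $T=\emptyset$; while $S\ne\emptyset$: among pairs $(x,y)\in (S\cup\bar S^R)^2$ with $x=y$, or with $x\ne y$ and $\bar x^R\ne y$, pick one maximizing $\mathrm{ov}(x,y)$ (ties arbitrary); if $x=y$, remove $x,\bar x^R$ from $S$ and add $x$ to $T$; otherwise remove $x,\bar x^R,y,\bar y^R$ from $S$ and add $\langle x,y\rangle$. Each current string $z$ is associated with a sequence $(z_1,\dots,z_h)$ of vertices of $G_S$ with $z=\langle z_1,\dots,z_h\rangle$: initially $s_i\leftrightarrow(s_i)$; $\bar z^R\leftrightarrow(\bar{z_h}^R,\dots,\bar{z_1}^R)$; a merged string $\langle x,y\rangle$ is associated with the concatenation of the sequences of $x$ and $y$; when $z$ with sequence $(z_1,\dots,z_h)$ is moved to $T$, the cycle $z_1,\dots,z_h,z_1$ is formed. These cycles form the cycle cover $\mathcal C$ (which is an optimal cycle cover), and $T$ consists of the strings $\langle z_1,\dots,z_h\rangle$ for the cycles $z_1,\dots,z_h,z_1\in\mathcal C$. Periodicity: for a finite string $s$, $\mathrm{factor}(s)$ is the shortest $x$ with $s=x^iy$, $i\ge1$, $y$ a (possibly empty) prefix of $x$; for a semi-infinite string $s$ with $s=xs$ for some nonempty $x$ ($s$ periodic), $\mathrm{factor}(s)$ is the shortest such $x$; $\mathrm{period}(s)=|\mathrm{factor}(s)|$. Strings (finite or periodic semi-infinite) $x,y$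 are equivalent if $\mathrm{factor}(x)=pq$, $\mathrm{factor}(y)=qp$ for some $p,q$, inequivalent otherwise. For semi-infinite $\alpha=c_1c_2\cdots$, $\alpha[k]=c_kc_{k+1}\cdots$; for finite $s$, $\mathrm{ov}(s,\alpha[k])$ is the length of the longest $v$ with $s=uv$, $u$ nonempty, $v$ a prefix of $\alpha[k]$. $\alpha[k]$ is a critical rotation of a periodic semi-infinite $\alpha$ if $\mathrm{ov}(s,\alpha[k])\le\mathrm{period}(s)+\tfrac12\mathrm{period}(\alpha)$ for every finite $s$ inequivalent to $\alpha$. Properties of $x_C$, for the cycle $C=z_1,\dots,z_r,z_1$ with $\langle z_1,\dots,z_r\rangle\in T$: there is an index $j\in\{1,\dots,r\}$ such that (1) $\langle z_{j+1},\dots,z_r,z_1,\dots,z_j\rangle$ is a suffix of $x_C$; (2) $x_C$ is a substring of $y_C=\langle z_j,\dots,z_r,z_1,\dots,z_j\rangle$; (3) $x_C$ is equivalent to $\langle z_{j+1},\dots,z_r,z_1,\dots,z_j\rangle$; (4) $\mathrm{factor}(x_C)^\infty$ is a critical rotation of $\mathrm{factor}(\langle z_1,\dots,z_r\rangle)^\infty$. (Such strings are known to exist.) *)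

(* Defs.v *)
From HB Require Import structures.
From mathcomp Require Import all_boot.
Set Implicit Arguments.
Unset Strict Implicit.
Unset Printing Implicit Defensive.

Inductive base := Ba | Bt | Bg | Bc.

Definition base_eqb (x y : base) : bool :=
  match x, y with
  | Ba, Ba | Bt, Bt | Bg, Bg | Bc, Bc => true
  | _, _ => false
  end.
Lemma base_eqP : Equality.axiom base_eqb.
Proof. by case; case; constructor. Qed.
HB.instance Definition _ := hasDecEq.Build base base_eqP.

Definition comp (b : base) : base :=
  match b with Ba => Bt | Bt => Ba | Bg => Bc | Bc => Bg end.

Definition str := seq base.

Definition rc (s : str) : str := map comp (rev s).

(** * Vertices of G_S: (i, false) stands for s_i, (i, true) for \bar{s_i}^R *)
Definition vertex := (nat * bool)%type.

Definition vstr (S : seq str) (v : vertex) : str :=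
  if v.2 then rc (nth [::] S v.1) else nth [::] S v.1.

Definition rcseq (sq : seq vertex) : seq vertex :=
  rev (map (fun v => (v.1, ~~ v.2)) sq).

(** SCS-RC instance: no string of S ∪ \bar S^R is a substring of another
    (strings indexed by distinct i are never substrings of each other; for the
    same index, s_i and \bar s_i^R have equal length so the condition is automatic). *)
Definition scs_rc_instance (S : seq str) : Prop :=
  forall i j (b b' : bool), i < size S -> j < size S -> i != j ->
    ~~ infix (vstr S (i, b)) (vstr S (j, b')).

(** ov(x,y): longest v with x = uv, y = vw, u,w nonempty *)
Definition ov (x y : str) : nat :=
  \max_(k < minn (size x) (size y) | drop (size x - k) x == take k y) k.

Definition pref (x y : str) : str := take (size x - ov x y) x.
Definition dist (x y : str) : nat := size x - ov x y.

Fixpoint merge (l : seq str) : str :=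
  match l with
  | [::] => [::]
  | [:: x] => x
  | x :: ((y :: _) as l') => pref x y ++ merge l'
  end.

(** a current string together with its associated vertex sequence;
    the pair {z, \bar z^R} is stored once, orientation chosen by a boolean *)
Definition item := (str * seq vertex)%type.

Definition orient (o : bool) (it : item) : item :=
  if o then (rc it.1, rcseq it.2) else it.

Definition gstate := (seq item * seq item)%type. (* (current S, T) *)

Definition init_state (S : seq str) : gstate :=
  ([seq (nth [::] S i, [:: (i, false)]) | i <- iota 0 (size S)], [::]).

(** the pair (x,y) = (orient o it_k, orient o' it_l) is admissible iff
    x = y (same item, same orientation) or x ≠ y and \bar x^R ≠ y (different items) *)
Definition admissible (k l : nat) (o o' : bool) : bool :=
  ((k == l) && (o == o')) || (k != l).

Definition max_ov (items : seq item) (v : nat) : Prop :=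
  forall k l (o o' : bool), k < size items -> l < size items ->
    admissible k l o o' ->
    ov (orient o (nth ([::], [::]) items k)).1
       (orient o' (nth ([::], [::]) items l)).1 <= v.

Inductive gstep : gstate -> gstate -> Prop :=
  | gstep_self (items rest T : seq item) (it : item) (o : bool) :
      perm_eq items (it :: rest) ->
      max_ov items (ov (orient o it).1 (orient o it).1) ->
      gstep (items, T) (rest, rcons T (orient o it))
  | gstep_merge (items rest T : seq item) (it1 it2 : item) (o1 o2 : bool) :
      perm_eq items (it1 :: it2 :: rest) ->
      max_ov items (ov (orient o1 it1).1 (orient o2 it2).1) ->
      let x := orient o1 it1 in
      let y := orient o2 it2 in
      gstep (items, T)
            (rcons rest (pref x.1 y.1 ++ y.1, x.2 ++ y.2), T).

(** grun st T : from state st the algorithm can terminate with output T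
    (list of (string of T, its cycle z_1..z_h)) *)
Inductive grun : gstate -> seq item -> Prop :=
  | grun_done (T : seq item) : grun ([::], T) T
  | grun_step (st st' : gstate) (T : seq item) :
      gstep st st' -> grun st' T -> grun st T.

Definition mgreedy_rc (S : seq str) (T : seq item) : Prop :=
  grun (init_state S) T.

(** x^i y = s with i >= 1 and y a prefix of x (every such x is a prefix of s,
    so it suffices to search lengths p <= |s| and x = take p s) *)
Definition rep_len (s : str) (p : nat) : bool :=
  [exists i : 'I_(size s).+1, exists k : 'I_p.+1,
     (0 < i) && (s == flatten (nseq i (take p s)) ++ take k (take p s))].

Definition factor (s : str) : str :=
  take (find (rep_len s) (iota 0 (size s).+1)) s.
Definition period (s : str) : nat := size (factor s).

Definition sinf := nat -> base.

Definition infpow (x : str) : sinf := fun n => nth Ba x (n %% size x).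

Definition prepends (x : str) (al : sinf) : Prop :=
  forall n, al n = if n < size x then nth Ba x n else al (n - size x).

Definition inf_factor (al : sinf) (x : str) : Prop :=
  0 < size x /\ prepends x al /\
  forall y, 0 < size y -> prepends y al -> size x <= size y.

Definition inf_period (al : sinf) (p : nat) : Prop :=
  exists x, inf_factor al x /\ size x = p.

Definition equiv_fin (x y : str) : Prop :=
  exists p q, factor x = p ++ q /\ factor y = q ++ p.

Definition equiv_fin_inf (s : str) (al : sinf) : Prop :=
  exists p q, factor s = p ++ q /\ inf_factor al (q ++ p).

(** α[k+1] (0-indexed shift) *)
Definition shift (al : sinf) (k : nat) : sinf := fun n => al (k + n).

Definition ov_inf (s : str) (al : sinf) : nat :=
  \max_(l < size s | drop (size s - l) s == mkseq al l) l.

(** γ is a critical rotation of the periodic semi-infinite α: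
    γ = α[k] for some k, and ov(s, α[k]) <= period(s) + period(α)/2 for every
    finite s inequivalent to α (doubled to stay in nat) *)
Definition critical_rotation (ga al : sinf) : Prop :=
  exists k, (forall n, ga n = shift al k n) /\
    forall (s : str), ~ equiv_fin_inf s al ->
      forall pa, inf_period al pa ->
        2 * ov_inf s (shift al k) <= 2 * period s + pa.

(** properties (1)-(4) of x_C for cycle C = z_1..z_r (as a vertex sequence) *)
Definition xC_props (S : seq str) (C : seq vertex) (x : str) : Prop :=
  exists j, 1 <= j <= size C /\
    let w := merge (map (vstr S) (rot j C)) in
    [/\ suffix w x,
        infix x (merge (map (vstr S) (nth (0, false) C j.-1 :: rot j C))),
        equiv_fin x w &
        critical_rotation (infpow (factor x))
                          (infpow (factor (merge (map (vstr S) C))))].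

(* Main.v *)
Require Import Defs.
From mathcomp Require Import all_boot.
From mathcomp Require Import zify.
Set Implicit Arguments.
Unset Strict Implicit.
Unset Printing Implicit Defensive.


Lemma ov_spec x y : drop (size x - ov x y) x = take (ov x y) y.
Proof.
rewrite /ov; move: (minn _ _) => m; case: m => [|n].
  by rewrite big_ord0 subn0 drop_size take0.
have P0 : (drop (size x - 0) x == take 0 y) by rewrite subn0 drop_size take0.
rewrite (bigmax_eq_arg (@ord0 n)) //; case: arg_maxnP => //= i Pi _; exact/eqP.
Qed.

Lemma ov_max x y k : k < minn (size x) (size y) -> drop (size x - k) x = take k y -> k <= ov x y.
Proof. by move=> lt e; apply: (bigmax_sup (Ordinal lt)) => //=; apply/eqP. Qed.

Lemma ov_leq x y : ov x y <= (minn (size x) (size y)).-1.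
Proof.
rewrite /ov; apply/bigmax_leqP => i _; case: i => i /=; case: (minn _ _) => //.
Qed.

Lemma ov_lex x y : ov x y <= size x.
Proof. have := ov_leq x y; lia. Qed.
Lemma ov_ley x y : ov x y <= size y.
Proof. have := ov_leq x y; lia. Qed.
Lemma ov_ltx x y : 0 < ov x y -> ov x y < size x.
Proof. have := ov_leq x y; lia. Qed.
Lemma ov_lty x y : 0 < ov x y -> ov x y < size y.
Proof. have := ov_leq x y; lia. Qed.

Lemma ov_dec x y : exists P V Q, [/\ x = P ++ V, y = V ++ Q, size V = ov x y & pref x y = P].
Proof.
exists (take (size x - ov x y) x), (take (ov x y) y), (drop (ov x y) y); split => //.
- by rewrite -ov_spec cat_take_drop.
- by rewrite cat_take_drop.
- by rewrite size_take; have := ov_ley x y; case: ltngtP => //; lia.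
Qed.


Lemma compK : involutive Defs.comp. Proof. by case. Qed.
Lemma comp_inj : injective Defs.comp. Proof. exact: inv_inj compK. Qed.
Lemma rcK : involutive rc.
Proof. by move=> s; rewrite /rc -map_rev revK -map_comp (eq_map compK) map_id. Qed.
Lemma rc_inj : injective rc. Proof. exact: inv_inj rcK. Qed.
Lemma size_rc s : size (rc s) = size s. Proof. by rewrite size_map size_rev. Qed.
Lemma rc_cat a b : rc (a ++ b) = rc b ++ rc a. Proof. by rewrite /rc rev_cat map_cat. Qed.

Lemma ov_rc x y : ov (rc y) (rc x) = ov x y.
Proof.
rewrite /ov !size_rc minnC; apply: eq_bigl => k.
have := ltn_ord k; rewrite leq_min => /andP[kx ky].
rewrite /rc -map_drop -map_take drop_rev take_rev subKn; last by lia.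
by rewrite (inj_eq (inj_map comp_inj)) (inj_eq (can_inj revK)) eq_sym.
Qed.

Definition mrg (X Y : str) := pref X Y ++ Y.

Lemma mrg_rc X Y : rc (mrg X Y) = mrg (rc Y) (rc X).
Proof.
have [P [V [Q [eX eY eL eP]]]] := ov_dec X Y.
rewrite /mrg {2}/pref ov_rc size_rc -eL eP eY !rc_cat eX rc_cat catA.
rewrite take_size_cat //; rewrite size_rc size_cat; lia.
Qed.

Lemma prefix_rc a b : prefix (rc a) (rc b) = suffix a b.
Proof.
by rewrite prefixE /rc size_map -map_take (inj_eq (inj_map comp_inj)) -prefixE prefix_rev.
Qed.
Lemma suffix_rc a b : suffix (rc a) (rc b) = prefix a b.
Proof. by rewrite -prefix_rc !rcK. Qed.


Lemma drop_addn_cat (P Y : str) m : drop (size P + m) (P ++ Y) = drop m Y.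
Proof. by rewrite drop_cat ltnNge leq_addr /= addKn. Qed.

Lemma ovA X Y W : ov Y W <= ov X Y -> ov X W <= ov X Y ->
  (prefix Y W -> size W <= size Y) -> ov (mrg X Y) W <= ov X Y.
Proof.
move=> hYW hXW hpre.
have [P [V [Q [eX eY eL eP]]]] := ov_dec X Y.
have eZ : mrg X Y = P ++ Y by rewrite /mrg eP.
rewrite eZ; set L := ov X Y in hYW hXW eL *; set L' := ov (P ++ Y) W.
rewrite leqNgt; apply/negP => hlt.
have hpos : 0 < L' by lia.
have l1 := ov_ltx hpos; have l2 := ov_lty hpos.
have sp := ov_spec (P ++ Y) W; rewrite -/L' in sp.
have sY : size Y = size V + size Q by rewrite eY size_cat.
have sX : size X = size P + size V by rewrite eX size_cat.
rewrite size_cat in l1 sp.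
case: (ltngtP L' (size Y)) => hc.
- have := ov_max (x:=Y) (y:=W) (k:=L').
  rewrite leq_min hc l2 => /(_ isT).
  have e : size P + size Y - L' = size P + (size Y - L') by lia.
  rewrite e drop_addn_cat in sp => /(_ sp); lia.
-
  set d := size P + size Y - L' in sp.
  have hd : d < size P by rewrite /d; lia.
  rewrite drop_cat hd in sp.
  set k := size X - d.
  have := ov_max (x:=X) (y:=W) (k:=k).
  have -> : size X - k = d by rewrite /k; lia.
  have hk : k < minn (size X) (size W) by rewrite leq_min; apply/andP; split; rewrite /k; lia.
  move=> /(_ hk); rewrite [in drop _ X]eX.
  have hd' : (d < size P) = true by apply/idP; lia.
  rewrite (drop_cat d P V) hd'.
  have -> : take k W = take k (take L' W) by rewrite take_takel // /k; lia.
  rewrite -sp take_cat size_drop.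
  have -> : (k < size P - d) = false by apply/negP; rewrite /k; lia.
  have -> : k - (size P - d) = size V by rewrite /k; lia.
  rewrite eY take_size_cat // => /(_ erefl); rewrite /k; lia.
- move: sp; rewrite hc.
  have -> : size P + size Y - size Y = size P by lia.
  rewrite drop_size_cat // => sp.
  have : prefix Y W by rewrite prefixE -sp.
  move=> /hpre; lia.
Qed.

Lemma ovB X Y W : ov W X <= ov X Y -> ov W Y <= ov X Y ->
  (suffix X W -> size W <= size X) -> ov W (mrg X Y) <= ov X Y.
Proof.
move=> h1 h2 h3.
rewrite -ov_rc mrg_rc -(ov_rc X Y); apply: ovA.
- by rewrite !ov_rc.
- by rewrite !ov_rc.
- by rewrite prefix_rc !size_rc.
Qed.


Lemma ovC X Y : ov Y X <= ov X Y -> ov X X <= ov X Y -> ov Y Y <= ov X Y ->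
  ~~ suffix X Y -> ~~ prefix Y (mrg X Y) -> ov (mrg X Y) (mrg X Y) <= ov X Y.
Proof.
move=> h1 h2 h3 h4 h5; apply: ovA.
- by apply: ovB => // /(negP h4).
- by apply: ovB => //.
- by move=> /(negP h5).
Qed.

Lemma suffixP' (a X : str) : suffix a X -> exists P : str, X = P ++ a.
Proof. by case/suffixP => P ->; exists P. Qed.
Lemma prefixP' (a X : str) : prefix a X -> exists P : str, X = a ++ P.
Proof. by case/prefixP => P ->; exists P. Qed.
Lemma infixP' (a X : str) : infix a X -> exists P Q : str, X = P ++ a ++ Q.
Proof. by case/infixP => P [Q ->]; exists P, Q. Qed.

Lemma ov_mono (a b X Y : str) : suffix a X -> prefix b Y -> ov a b <= ov X Y.
Proof.
move=> /suffixP' [P ->] /prefixP' [Q ->].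
case: (posnP (ov a b)) => [->//|hp].
have l1 := ov_ltx hp; have l2 := ov_lty hp; have sp := ov_spec a b.
have h1 : ov a b < minn (size (P ++ a)) (size (b ++ Q)).
  rewrite !size_cat leq_min; apply/andP; split; [apply: (leq_trans l1); exact: leq_addl | apply: (leq_trans l2); exact: leq_addr].
apply: (ov_max h1).
rewrite size_cat takel_cat; last by lia.
have -> : size P + size a - ov a b = size P + (size a - ov a b) by lia.
by rewrite drop_addn_cat.
Qed.

Lemma prefix_mrg X Y : prefix X (mrg X Y).
Proof.
have [P [V [Q [eX eY eL eP]]]] := ov_dec X Y.
by rewrite /mrg eP eY eX catA prefix_prefix.
Qed.
Lemma suffix_mrg X Y : suffix Y (mrg X Y).
Proof. exact: suffix_suffix. Qed.

Lemma size_mrg X Y : size (mrg X Y) = size X - ov X Y + size Y.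
Proof. by rewrite /mrg size_cat /pref size_takel // leq_subr. Qed.

Lemma infix3 (u P V Q : str) : infix u (P ++ V ++ Q) ->
  [\/ infix u (P ++ V), infix u (V ++ Q) | size V < size u].
Proof.
move=> /infixP' [a [b e]].
have hs : size P + size V + size Q = size a + size u + size b.
  by move: (congr1 size e); rewrite !size_cat; lia.
case: (leqP (size a + size u) (size P + size V)) => h1.
  apply: Or31; move: (congr1 (take (size P + size V)) e).
  rewrite catA take_size_cat ?size_cat // catA take_cat size_cat.
  case: ifP => [h|_]; first by lia.
  by move=> ->; apply/infixP; exists a, (take (size P + size V - (size a + size u)) b); rewrite catA.
case: (leqP (size P) (size a)) => h2.
  apply: Or32; move: (congr1 (drop (size P)) e).
  rewrite drop_size_cat // drop_cat.
  case: ifP => h3 ->.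
    by apply/infixP; exists (drop (size P) a), b.
  have -> : size P - size a = 0 by lia.
  by rewrite drop0; apply/infixP; exists [::], b.
by apply: Or33; lia.
Qed.

Definition flip (v : vertex) : vertex := (v.1, ~~ v.2).

Lemma vstr_flip S v : vstr S (flip v) = rc (vstr S v).
Proof. by case: v => i [] //=; rewrite /vstr /= rcK. Qed.

Lemma rcseq_cat s1 s2 : rcseq (s1 ++ s2) = rcseq s2 ++ rcseq s1.
Proof. by rewrite /rcseq map_cat rev_cat. Qed.

Lemma rcseq_cons v s : rcseq (v :: s) = flip (last v s) :: rev (map flip (belast v s)).
Proof. by rewrite /rcseq lastI map_rcons rev_rcons. Qed.
Lemma last_rcseq v s : last (flip (last v s)) (rev (map flip (belast v s))) = flip v.
Proof. by case: s => [|y s] //=; rewrite rev_cons last_rcons. Qed.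

Fixpoint ovs (l : seq str) : seq nat :=
  match l with
  | x :: ((y :: _) as l') => ov x y :: ovs l'
  | _ => [::]
  end.

Lemma ovs_cat x a y b : ovs ((x :: a) ++ (y :: b)) = ovs (x :: a) ++ ov (last x a) y :: ovs (y :: b).
Proof.
elim: a x => [|z a IH] x; first by [].
change (ov x z :: ovs ((z :: a) ++ y :: b) = (ov x z :: ovs (z :: a)) ++ ov (last z a) y :: ovs (y :: b)).
by rewrite IH.
Qed.

Lemma merge_cons2 x y l : Defs.merge (x :: y :: l) = pref x y ++ Defs.merge (y :: l).
Proof. by []. Qed.
Lemma ovs_cons2 x y l : ovs (x :: y :: l) = ov x y :: ovs (y :: l).
Proof. by []. Qed.

Lemma sumn_cons' (n : nat) l : sumn (n :: l) = n + sumn l.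
Proof. by []. Qed.

Lemma size_merge l : size (Defs.merge l) + sumn (ovs l) = sumn (map size l).
Proof.
elim: l => [|x l IH]; first by [].
case: l IH => [|y l] IH; first by rewrite /= !addn0.
rewrite merge_cons2 ovs_cons2 size_cat /pref size_takel ?leq_subr //.
change (sumn (map size (x :: y :: l))) with (size x + sumn (map size (y :: l))).
rewrite sumn_cons' -IH.
have := ov_lex x y; lia.
Qed.


Lemma final_bound (l : seq str) (X : str) K j :
  size X + sumn (ovs l) = sumn (map size l) ->
  (forall k, k \in ovs l -> K <= k) ->
  ov (last [::] l) (head [::] l) <= K -> 0 < j <= size l ->
  size X <= size (Defs.merge (rot j l)).
Proof.
move=> hs hK hc /andP[j0 jl].
have hm := size_merge (rot j l).
case: (ltngtP j (size l)) jl => // [jlt _|-> _]; last first.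
  by rewrite rot_size in hm *; have := size_merge l; lia.
have sa : size (take j l) = j by rewrite size_takel // ltnW.
have sb : 0 < size (drop j l) by rewrite size_drop subn_gt0.
case Ea: (take j l) sa => [|x a] sa; first by move: j0; rewrite -sa.
case Eb: (drop j l) sb => [|y b] sb //.
have el : l = (x :: a) ++ (y :: b) by rewrite -Ea -Eb cat_take_drop.
have er : rot j l = (y :: b) ++ (x :: a) by rewrite /rot Ea Eb.
rewrite er in hm *; rewrite el in hs hK hc.
move: hs hK hc hm.
rewrite !ovs_cat !map_cat !sumn_cat !sumn_cons'.
move=> hs hK hc hm.
have hc' : ov (last y b) x <= K by move: hc; rewrite cat_cons /= last_cat.
have : K <= ov (last x a) y by apply: hK; rewrite mem_cat in_cons eqxx orbT.
lia.
Qed.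


Definition d0 : vertex := (0, false).

Inductive good (S : seq str) (K : nat) : str -> seq vertex -> Prop :=
| gleaf v : v.1 < size S -> good S K (vstr S v) [:: v]
| gnode X1 s1 X2 s2 : good S K X1 s1 -> good S K X2 s2 -> K <= ov X1 X2 ->
    ov X1 X2 = ov (vstr S (last d0 s1)) (vstr S (head d0 s2)) ->
    good S K (mrg X1 X2) (s1 ++ s2).

Section Good.
Variable S : seq str.

Lemma good_cons K X s : good S K X s -> exists v s', s = v :: s'.
Proof.
elim=> [v _|X1 s1 X2 s2 _ [v [s1' ->]] _ _ _ _]; first by exists v, [::].
by exists v, (s1' ++ s2).
Qed.

Lemma good_ends K X s : good S K X s ->
  prefix (vstr S (head d0 s)) X /\ suffix (vstr S (last d0 s)) X.
Proof.
elim=> [v _|X1 s1 X2 s2 g1 [p1 _] g2 [_ q2] _ _]; first by rewrite prefix_refl suffix_refl.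
have [v [s1' e1]] := good_cons g1; have [w [s2' e2]] := good_cons g2.
split.
  by apply: prefix_trans (prefix_mrg X1 X2); move: p1; rewrite e1.
apply: suffix_trans (suffix_mrg X1 X2) => //; move: q2.
by rewrite e2 e1 cat_cons /= last_cat.
Qed.

Lemma good_range K X s : good S K X s -> forall v, v \in s -> v.1 < size S.
Proof.
elim=> [v hv u|X1 s1 X2 s2 _ h1 _ h2 _ _ u]; first by rewrite inE => /eqP->.
by rewrite mem_cat => /orP[/h1|/h2].
Qed.

Lemma good_mono K K' X s : K' <= K -> good S K X s -> good S K' X s.
Proof.
move=> le; elim=> [v hv|X1 s1 X2 s2 _ h1 _ h2 hK he]; first exact: gleaf.
by apply: gnode => //; apply: leq_trans hK.
Qed.

Lemma good_rc K X s : good S K X s -> good S K (rc X) (rcseq s).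
Proof.
elim=> [v hv|X1 s1 X2 s2 g1 h1 g2 h2 hK he].
  rewrite -vstr_flip; exact: gleaf.
have [v [s1' e1]] := good_cons g1; have [w [s2' e2]] := good_cons g2.
rewrite mrg_rc rcseq_cat; apply: gnode => //; first by rewrite ov_rc.
rewrite ov_rc he e1 e2 !rcseq_cons.
have lc : forall (a : vertex) l, last d0 (a :: l) = last a l by [].
by rewrite !lc last_rcseq /= !vstr_flip ov_rc.
Qed.

Lemma good_size K X s : good S K X s ->
  size X + sumn (ovs (map (vstr S) s)) = sumn (map size (map (vstr S) s)).
Proof.
elim=> [v hv|X1 s1 X2 s2 g1 h1 g2 h2 hK he]; first by rewrite /= !addn0.
have [v [s1' e1]] := good_cons g1; have [w [s2' e2]] := good_cons g2.
move: h1 h2 he; rewrite e1 e2 !map_cat.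
rewrite [map _ (v :: _)]map_cons [map _ (w :: _)]map_cons ovs_cat -!map_cons => h1 h2 he.
rewrite !sumn_cat sumn_cons' size_mrg (last_map (vstr S)) -he.
have := ov_lex X1 X2; lia.
Qed.

Lemma good_ovs K X s : good S K X s -> forall k, k \in ovs (map (vstr S) s) -> K <= k.
Proof.
elim=> [v hv|X1 s1 X2 s2 g1 h1 g2 h2 hK he] k //.
have [v [s1' e1]] := good_cons g1; have [w [s2' e2]] := good_cons g2.
move: h1 h2 he; rewrite e1 e2 !map_cat.
rewrite [map _ (v :: _)]map_cons [map _ (w :: _)]map_cons ovs_cat -!map_cons => h1 h2 he.
rewrite mem_cat in_cons (last_map (vstr S)) -he => /or3P [/h1|/eqP->|/h2] //.
Qed.

Hypothesis scs : scs_rc_instance S.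

Lemma good_G4 K X s : good S K X s -> forall u, u.1 < size S -> u.1 \notin map fst s ->
  infix (vstr S u) X -> K < size (vstr S u).
Proof.
elim=> [v hv|X1 s1 X2 s2 g1 h1 g2 h2 hK he] u hu.
  rewrite inE => hne; case: u hu hne => i b hu hne; case: v hv hne => j b' hv hne.
  by have := scs b b' hu hv hne => /negP.
rewrite map_cat mem_cat negb_or => /andP[n1 n2].
have [P [V [Q [eX1 eX2 eL eP]]]] := ov_dec X1 X2.
rewrite /mrg eP eX2 => /infix3; rewrite -eX2 -eX1 => -[/(h1 _ hu n1)|/(h2 _ hu n2)|] //.
by rewrite eL => h; apply: leq_trans h.
Qed.

End Good.


Lemma prefix_total (a b c : str) : prefix a c -> prefix b c -> prefix a b || prefix b a.
Proof.
rewrite !prefixE => /eqP ea /eqP eb.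
case: (leqP (size a) (size b)) => h.
  have := congr1 (take (size a)) eb; rewrite take_takel // ea => <-.
  by rewrite eqxx.
have := congr1 (take (size b)) ea; rewrite take_takel ?eb => [<-|]; last exact: ltnW.
by rewrite eqxx orbT.
Qed.

Lemma suffix_total (a b c : str) : suffix a c -> suffix b c -> suffix a b || suffix b a.
Proof. by rewrite -!prefix_rc; apply: prefix_total. Qed.

Lemma rc_orient o (it : item) : rc (orient o it).1 = (orient (~~ o) it).1.
Proof. by case: o => //=; rewrite rcK. Qed.

Lemma ov_rcl a b : ov (rc a) b = ov (rc b) a.
Proof. by rewrite -{1}(rcK b) ov_rc. Qed.
Lemma ov_rcr a b : ov a (rc b) = ov b (rc a).
Proof. by rewrite -{1}(rcK a) ov_rc. Qed.

Lemma map_fst_rcseq s : map fst (rcseq s) = rev (map fst s).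
Proof. by rewrite /rcseq map_rev -map_comp. Qed.

Lemma perm_orient o (it : item) : perm_eq (map fst (orient o it).2) (map fst it.2).
Proof. by case: o => //=; rewrite map_fst_rcseq perm_rev. Qed.

Lemma mem_orient o (it : item) i : (i \in map fst (orient o it).2) = (i \in map fst it.2).
Proof. exact: perm_mem (perm_orient o it) i. Qed.

Definition disj (s t : seq vertex) := forall i, i \in map fst s -> i \notin map fst t.

Lemma disj_sym s t : disj s t -> disj t s.
Proof. by move=> h i it; apply/negP => /h; rewrite it. Qed.

Lemma suffix_small (a P V : str) : suffix a (P ++ V) -> size a <= size V -> suffix a V.
Proof.
move=> /suffixP' [R e] h; apply/suffixP.
exists (drop (size P) R).
move: (congr1 (drop (size P)) e); rewrite drop_size_cat // drop_cat.
case: ifP => // /negbT hl.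
have eq : size P = size R by move: (congr1 size e); rewrite !size_cat; lia.
by rewrite eq subnn drop0 drop_size => ->.
Qed.

Lemma prefix_small (a V Q : str) : prefix a (V ++ Q) -> size a <= size V -> prefix a V.
Proof.
move=> /prefixP' [R e] h; apply/prefixP; exists (drop (size a) V).
have : take (size a) (V ++ Q) = a by rewrite e take_size_cat.
by rewrite takel_cat // => {1}<-; rewrite cat_take_drop.
Qed.

Lemma small_infix_l (X Y xl : str) : suffix xl X -> size xl <= ov X Y -> infix xl Y.
Proof.
have [P [V [Q [eX eY eL _]]]] := ov_dec X Y.
rewrite -eL eX => hs hl; apply: suffix_infix_trans (suffix_small hs hl) _.
by rewrite eY; apply: prefixW; apply: prefix_prefix.
Qed.

Lemma small_infix_r (X Y yh : str) : prefix yh Y -> size yh <= ov X Y -> infix yh X.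
Proof.
have [P [V [Q [eX eY eL _]]]] := ov_dec X Y.
rewrite -eL eY => hs hl; apply: prefix_infix_trans (prefix_small hs hl) _.
by rewrite eX; apply: suffixW; apply: suffix_suffix.
Qed.

Lemma ov_ends (X Y xl yh : str) : suffix xl X -> prefix yh Y ->
  ov X Y < size xl -> ov X Y < size yh -> ov xl yh = ov X Y.
Proof.
move=> hs hp h1 h2; apply/eqP; rewrite eqn_leq ov_mono //=.
have [R eX] := suffixP' hs; have [R' eY] := prefixP' hp.
apply: ov_max; first by rewrite leq_min h1 h2.
have sp := ov_spec X Y; move: sp h1 h2; set L := ov X Y => sp h1 h2.
move: sp; rewrite eX eY takel_cat ?size_cat; last by lia.
have -> : size R + size xl - L = size R + (size xl - L) by lia.
by rewrite drop_addn_cat.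
Qed.


Section M.
Variable S : seq str.
Hypothesis scs : scs_rc_instance S.

Lemma scs_pair (u v : vertex) : u.1 < size S -> v.1 < size S -> u.1 != v.1 ->
  ~~ infix (vstr S u) (vstr S v).
Proof. by case: u => i b; case: v => j b'; apply: scs. Qed.

Lemma no_prefix K1 K2 P sP Q sQ : good S K1 P sP -> good S K2 Q sQ -> disj sP sQ ->
  ~~ prefix P Q.
Proof.
move=> g1 g2 d; apply/negP => hpq.
have [v [s1 e1]] := good_cons g1; have [w [s2 e2]] := good_cons g2.
have [p1 _] := good_ends g1; have [p2 _] := good_ends g2.
rewrite e1 /= in p1; rewrite e2 /= in p2.
have hv : v.1 < size S by apply: (good_range g1); rewrite e1 mem_head.
have hw : w.1 < size S by apply: (good_range g2); rewrite e2 mem_head.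
have hne : v.1 != w.1.
  apply/eqP => ee; have := d v.1; rewrite e1 e2 /= !inE eqxx ee eqxx /=.
  by move=> /(_ isT).
have := prefix_total (prefix_trans p1 hpq) p2 => /orP[/prefixW h|/prefixW h].
  by move: (scs_pair hv hw hne); rewrite h.
by move: (scs_pair hw hv); rewrite eq_sym h => /(_ hne).
Qed.

Lemma no_suffix K1 K2 P sP Q sQ : good S K1 P sP -> good S K2 Q sQ -> disj sP sQ ->
  ~~ suffix P Q.
Proof.
move=> g1 g2 d; apply/negP => hpq.
have [v [s1 e1]] := good_cons g1; have [w [s2 e2]] := good_cons g2.
have [_ p1] := good_ends g1; have [_ p2] := good_ends g2.
rewrite e1 /= in p1; rewrite e2 /= in p2.
have m1 : last v s1 \in sP by rewrite e1 mem_last.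
have m2 : last w s2 \in sQ by rewrite e2 mem_last.
have hv := good_range g1 m1; have hw := good_range g2 m2.
have hne : (last v s1).1 != (last w s2).1.
  apply/eqP => ee; have := d (last v s1).1.
  rewrite (map_f fst m1) ee (map_f fst m2) => /(_ isT).
  by [].
have := suffix_total (suffix_trans p1 hpq) p2 => /orP[/suffixW h|/suffixW h].
  by move: (scs_pair hv hw hne); rewrite h.
by move: (scs_pair hw hv); rewrite eq_sym h => /(_ hne).
Qed.

Lemma Mgen KX KY X sX Y sY L : good S KX X sX -> good S KY Y sY -> disj sX sY ->
  ov X Y = L -> ov Y X <= L -> ov X X <= L -> ov Y Y <= L ->
  ov (mrg X Y) (mrg X Y) <= L.
Proof.
move=> gX gY d hL h1 h2 h3; rewrite -hL; apply: ovC; rewrite ?hL //.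
  exact: no_suffix gX gY d.
apply/negP => hp.
have := prefix_total hp (prefix_mrg X Y) => /orP[h|h].
  by move: (no_prefix gY gX (disj_sym d)); rewrite h.
by move: (no_prefix gX gY d); rewrite h.
Qed.

Lemma MgenW KX KY KW X sX Y sY W sW L : good S KX X sX -> good S KY Y sY -> good S KW W sW ->
  disj sX sW -> disj sY sW ->
  ov X Y = L -> ov Y W <= L -> ov X W <= L -> ov W X <= L -> ov W Y <= L ->
  ov (mrg X Y) W <= L /\ ov W (mrg X Y) <= L.
Proof.
move=> gX gY gW dX dY hL h1 h2 h3 h4; rewrite -hL; split.
  apply: ovA; rewrite ?hL // => hp.
  by move: (no_prefix gY gW dY); rewrite hp.
apply: ovB; rewrite ?hL // => hp.
by move: (no_suffix gX gW dX); rewrite hp.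
Qed.

End M.


Definition idx (items : seq item) : seq nat := flatten [seq map fst it.2 | it <- items].
Definition maxov2 (items : seq item) v := forall a b (o o' : bool), a \in items -> b \in items ->
  (a != b) || (o == o') -> ov (orient o a).1 (orient o' b).1 <= v.

Section Inv.
Variable S : seq str.
Hypothesis scs : scs_rc_instance S.

Definition Pfinal (t : item) := forall j, 0 < j <= size t.2 ->
  size t.1 <= size (Defs.merge (map (vstr S) (rot j t.2))).

Definition Inv (st : gstate) := [/\ uniq (idx st.1),
  (forall it, it \in st.1 -> exists K, good S K it.1 it.2 /\ maxov2 st.1 K) &
  forall t, t \in st.2 -> Pfinal t].

Lemma max_ov2 items v : max_ov items v -> maxov2 items v.
Proof.
move=> h a b o o' ha hb hab.
have := h (index a items) (index b items) o o'; rewrite !index_mem !nth_index //.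
apply=> //; rewrite /admissible.
case: (eqVneq a b) hab => [<-|ne] hoo; first by move: hoo; rewrite !eqxx /= => ->.
apply/orP; right; apply/negP => /eqP e.
have eab : a = b by rewrite -(nth_index ([::], [::]) ha) e nth_index.
by move/eqP: ne; rewrite eab.
Qed.

Lemma good_orient K (it : item) o : good S K it.1 it.2 -> good S K (orient o it).1 (orient o it).2.
Proof. by case: o => //= g; apply: good_rc. Qed.

Lemma maxov2_mono items v v' : v <= v' -> maxov2 items v -> maxov2 items v'.
Proof. by move=> le h a b o o' ha hb hab; apply: leq_trans (h a b o o' ha hb hab) le. Qed.

Lemma maxov2_sub items items' v : {subset items' <= items} -> maxov2 items v -> maxov2 items' v.
Proof. by move=> sub h a b o o' ha hb; apply: h; apply: sub. Qed.

Lemma idx_perm s t : perm_eq s t -> perm_eq (idx s) (idx t).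
Proof. by move=> p; apply: perm_flatten; apply: perm_map. Qed.

Lemma mem_idx (b : item) s i : b \in s -> i \in map fst b.2 -> i \in idx s.
Proof. by move=> hb hi; apply/flattenP; exists (map fst b.2) => //; apply: (map_f (fun it : item => map fst it.2)). Qed.

Lemma good_last_mem K X s : good S K X s -> last d0 s \in s.
Proof. by move=> g; have [v [s' ->]] := good_cons g; exact: (mem_last v s'). Qed.
Lemma good_head_mem K X s : good S K X s -> head d0 s \in s.
Proof. by move=> g; have [v [s' ->]] := good_cons g; apply: mem_head. Qed.

Lemma inv_self items rest T it o : perm_eq items (it :: rest) -> Inv (items, T) ->
  Inv (rest, rcons T (orient o it)).
Proof.
move=> hp [U G PT].
have mr : {subset rest <= items} by move=> a ha; rewrite (perm_mem hp) inE ha orbT.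
have hi : it \in items by rewrite (perm_mem hp) mem_head.
split.
- move: U; rewrite (perm_uniq (idx_perm hp)) /= cat_uniq => /and3P [_ _ ->] //.
- move=> it' /= h'; have [K [g m]] := G it' (mr _ h'); exists K; split => //.
  exact: maxov2_sub mr m.
- move=> t /=; rewrite mem_rcons inE => /orP [/eqP -> | /PT //].
  have [K [g m]] := G it hi; have g' := good_orient o g.
  move=> j hj; rewrite map_rot; apply: final_bound.
  + exact: good_size g'.
  + exact: good_ovs g'.
  + have [v [s' e]] := good_cons g'; have [p q] := good_ends g'.
    apply: leq_trans (m it it o o hi hi _); last by rewrite !eqxx orbT.
    have hl : last [::] (map (vstr S) (orient o it).2) = vstr S (last d0 (orient o it).2).
      by rewrite e /= (last_map (vstr S)).
    have hh : head [::] (map (vstr S) (orient o it).2) = vstr S (head d0 (orient o it).2).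
      by rewrite e.
    by rewrite hl hh; apply: ov_mono.
  + by rewrite size_map.
Qed.

Lemma inv_merge items rest T (it1 it2 : item) o1 o2 :
  perm_eq items (it1 :: it2 :: rest) ->
  max_ov items (ov (orient o1 it1).1 (orient o2 it2).1) -> Inv (items, T) ->
  Inv (rcons rest (pref (orient o1 it1).1 (orient o2 it2).1 ++ (orient o2 it2).1,
                   (orient o1 it1).2 ++ (orient o2 it2).2), T).
Proof.
move=> hp hm [U G PT].
set x := orient o1 it1; set y := orient o2 it2.
set L := ov x.1 y.1 in hm *.
have M := max_ov2 hm.
have mr : {subset rest <= items} by move=> a ha; rewrite (perm_mem hp) !inE ha !orbT.
have hi1 : it1 \in items by rewrite (perm_mem hp) mem_head.
have hi2 : it2 \in items by rewrite (perm_mem hp) !inE eqxx orbT.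
move: (U); rewrite (perm_uniq (idx_perm hp)) /= !cat_uniq => /and5P [_ hA _ hB _].
move/hasPn: hA => hA; move/hasPn: hB => hB.
have [K1 [g1 m1]] := G it1 hi1; have [K2 [g2 m2]] := G it2 hi2.
have d12 : forall i, i \in map fst it1.2 -> i \notin map fst it2.2.
  by move=> i h1; apply/negP => h2; move: (hA i); rewrite mem_cat h2 h1 => /(_ isT).
have d1r : forall i, i \in map fst it1.2 -> i \notin idx rest.
  by move=> i h1; apply/negP => h2; move: (hA i); rewrite mem_cat h2 orbT h1 => /(_ isT).
have d2r : forall i, i \in map fst it2.2 -> i \notin idx rest.
  by move=> i h1; apply/negP => h2; move: (hB i); rewrite h2 h1 => /(_ isT).
have ne12 : it1 != it2.
  apply/eqP => e; have hv := good_head_mem g1.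
  by move: (d12 _ (map_f fst hv)); rewrite -e (map_f fst hv).
have neb : forall b, b \in rest -> (it1 != b) && (it2 != b).
  move=> b hb; have [Kb [gb _]] := G b (mr _ hb); have hv := good_head_mem gb.
  have hr := mem_idx hb (map_f fst hv).
  apply/andP; split; apply/eqP => e.
    by subst b; move: (d1r _ (map_f fst hv)); rewrite hr.
  by subst b; move: (d2r _ (map_f fst hv)); rewrite hr.
have LK1 : L <= K1 by apply: (m1 it1 it2 o1 o2 hi1 hi2); rewrite ne12.
have LK2 : L <= K2 by apply: (m2 it1 it2 o1 o2 hi1 hi2); rewrite ne12.
have gx : good S L x.1 x.2 by apply: good_mono LK1 (good_orient o1 g1).
have gy : good S L y.1 y.2 by apply: good_mono LK2 (good_orient o2 g2).
have dxy : disj x.2 y.2.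
  by move=> i; rewrite !mem_orient => /d12.
have dxr : forall b o', b \in rest -> disj x.2 (orient o' b).2.
  move=> b o' hb i; rewrite !mem_orient => /d1r h; apply/negP => hh.
  by move: h; rewrite (mem_idx hb hh).
have dyr : forall b o', b \in rest -> disj y.2 (orient o' b).2.
  move=> b o' hb i; rewrite !mem_orient => /d2r h; apply/negP => hh.
  by move: h; rewrite (mem_idx hb hh).
have [ex px] := good_ends gx; have [ey py] := good_ends gy.
have hxl : L < size (vstr S (last d0 x.2)).
  rewrite ltnNge; apply/negP => hle.
  have hinf := small_infix_l px hle.
  have hr := good_range gx (good_last_mem gx).
  have hn : (last d0 x.2).1 \notin map fst y.2 by apply: dxy; apply: map_f; apply: good_last_mem gx.
  by have := good_G4 scs gy hr hn hinf; rewrite ltnNge hle.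
have hyh : L < size (vstr S (head d0 y.2)).
  rewrite ltnNge; apply/negP => hle.
  have hinf := small_infix_r ey hle.
  have hr := good_range gy (good_head_mem gy).
  have hn : (head d0 y.2).1 \notin map fst x.2.
    by apply: (disj_sym dxy); apply: map_f; apply: good_head_mem gy.
  by have := good_G4 scs gx hr hn hinf; rewrite ltnNge hle.
have M1 : L = ov (vstr S (last d0 x.2)) (vstr S (head d0 y.2)) by rewrite (ov_ends px ey).
have gZ : good S L (mrg x.1 y.1) (x.2 ++ y.2) by apply: gnode.
have WZ : forall b o', b \in rest ->
    ov (mrg x.1 y.1) (orient o' b).1 <= L /\ ov (orient o' b).1 (mrg x.1 y.1) <= L.
  move=> b o' hb; have [Kb [gb _]] := G b (mr _ hb).
  have /andP [n1 n2] := neb b hb.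
  have hb' := mr _ hb.
  apply: (MgenW scs gx gy (good_orient o' gb) (dxr b o' hb) (dyr b o' hb)) => //.
  - by apply: M => //; rewrite n2.
  - by apply: M => //; rewrite n1.
  - by apply: M => //; rewrite eq_sym n1.
  - by apply: M => //; rewrite eq_sym n2.
have ZZ : ov (mrg x.1 y.1) (mrg x.1 y.1) <= L.
  apply: (Mgen scs gx gy dxy) => //.
  - by apply: M => //; rewrite eq_sym ne12.
  - by apply: M => //; rewrite !eqxx.
  - by apply: M => //; rewrite !eqxx.
have M2 : maxov2 (rcons rest (mrg x.1 y.1, x.2 ++ y.2)) L.
  move=> a b o o'; rewrite !mem_rcons !inE => /orP [/eqP ea | ha] /orP [/eqP eb | hb] hab.
  - move: hab; rewrite ea eb eqxx /= => /eqP <-.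
    by case: o => /=; rewrite ?ov_rc.
  - rewrite ea; case: o hab => /= _; last exact: (WZ b o' hb).1.
    by rewrite ov_rcl rc_orient; exact: (WZ b (~~ o') hb).2.
  - rewrite eb; case: o' hab => /= _; last exact: (WZ a o ha).2.
    by rewrite ov_rcr rc_orient; exact: (WZ a (~~ o) ha).1.
  - by apply: M => //; apply: mr.
split.
- rewrite /idx map_rcons flatten_rcons -/(idx rest) /= map_cat.
  have p1 : perm_eq (map fst x.2 ++ map fst y.2) (map fst it1.2 ++ map fst it2.2).
    by apply: perm_cat; apply: perm_orient.
  have p2 : perm_eq (idx rest ++ (map fst x.2 ++ map fst y.2))
                    (map fst it1.2 ++ map fst it2.2 ++ idx rest).
    by rewrite perm_catC catA perm_cat2r.
  by rewrite (perm_uniq p2); move: U; rewrite (perm_uniq (idx_perm hp)).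
- move=> it /=; rewrite mem_rcons inE => /orP [/eqP -> | hr].
    by exists L; split.
  have [K [g m]] := G it (mr _ hr); exists K; split => //.
  apply: maxov2_mono M2; apply: (m it1 it2 o1 o2 hi1 hi2); by rewrite ne12.
- exact: PT.
Qed.

End Inv.


Lemma leq_sumn_map (T : eqType) (f : T -> nat) a s : a \in s -> f a <= sumn (map f s).
Proof.
elim: s => [//|b s IH]; rewrite inE => /orP [/eqP ->|h] /=; first exact: leq_addr.
by apply: leq_trans (IH h) _; apply: leq_addl.
Qed.

Lemma inv_init S : Inv S (init_state S).
Proof.
set items := (init_state S).1.
have e : idx items = iota 0 (size S).
  by rewrite /idx /items /init_state /= -map_comp; elim: (iota 0 (size S)) => //= i s ->.
split.
- by rewrite e iota_uniq.
- move=> it /mapP [i hi ->]; rewrite mem_iota add0n in hi.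
  exists (sumn (map (fun it : item => size it.1) items)); split.
    exact: (@gleaf S _ (i, false) hi).
  move=> a b o o' ha hb _.
  apply: leq_trans (ov_lex _ _) _.
  have -> : size (orient o a).1 = size a.1 by case: o => //=; rewrite size_rc.
  exact: (leq_sumn_map (fun it : item => size it.1) ha).
- by [].
Qed.

Lemma run_inv S st T : scs_rc_instance S -> grun st T -> Inv S st -> forall t, t \in T -> Pfinal S t.
Proof.
move=> scs; elim=> [T0 [_ _ PT] // | st0 st' T0 hs _ IH] hinv.
apply: IH; move: hinv; case: st0 st' / hs.
- by move=> items rest T1 it o hp _; apply: inv_self.
- by move=> items rest T1 it1 it2 o1 o2 hp hm; apply: inv_merge.
Qed.

Theorem lemma16 (S : seq str) (T : seq item) (xC : seq vertex -> str) :
  scs_rc_instance S ->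
  mgreedy_rc S T ->
  (forall C, C \in map snd T -> xC_props S C (xC C)) ->
  \sum_(t <- T) size t.1 <= \sum_(C <- map snd T) size (xC C).
Proof.
move=> scs hrun hx.
have PT := run_inv scs hrun (inv_init S).
rewrite big_map big_seq [X in _ <= X]big_seq; apply: leq_sum => t ht.
have [j [hj [hsuf _ _ _]]] := hx t.2 (map_f snd ht).
by apply: leq_trans (size_suffix hsuf); apply: PT.
Qed.
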